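(* There exists a function $f:\mathbb{N}\to\mathbb{R}$ with $f(n)/n^3\to0$ as $n\to\infty$ such that the following holds. Let $n$ and $\rho$ be positive integers with $\rho<n/2$, and let $k=\lfloor n/2\rfloor$. Let $s_1,\ldots,s_k$ be nonnegative real numbers satisfying $s_1+\ldots+s_k\leqslant\rho$. Then $$\varphi(s_1,\ldots,s_k):=\sum_{r=\rho}^{k}\min\left\{\frac{r^2}{4},\,1s_1+2s_2+\ldots+rs_r\right\}\leqslant\frac{15\,625\,n^3}{1\,597\,536}+f(n).$$ *)

(* Defs.v *)
From Stdlib Require Import Reals Lra Lia.
Open Scope R_scope.

(* sum_{i=m}^{n} f i  (empty, i.e. 0, when n < m) *)
Fixpoint sum_range (f : nat -> R) (m len : nat) : R :=
  match len with
  | O => 0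
  | S l => f m + sum_range f (S m) l
  end.

Definition sum_from_to (f : nat -> R) (m n : nat) : R :=
  sum_range f m (S n - m).

Definition phi (n rho : nat) (s : nat -> R) : R :=
  sum_from_to
    (fun r => Rmin (INR r ^ 2 / 4)
                   (sum_from_to (fun i => INR i * s i) 1 r))
    rho (Nat.div2 n).

(* Main.v *)
Require Import Defs.
From Stdlib Require Import Reals Lra Lia Psatz.
Open Scope R_scope.

Lemma sr_ext f g m len : (forall i, (m <= i < m + len)%nat -> f i = g i) ->
  sum_range f m len = sum_range g m len.
Proof.
  revert m; induction len; intros m H; simpl; auto.
  rewrite H by lia. rewrite (IHlen (S m)); auto. intros; apply H; lia.
Qed.

Lemma sr_le f g m len : (forall i, (m <= i < m + len)%nat -> f i <= g i) ->
  sum_range f m len <= sum_range g m len.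
Proof.
  revert m; induction len; intros m H; simpl; [lra|].
  apply Rplus_le_compat; [apply H; lia|]. apply IHlen; intros; apply H; lia.
Qed.

Lemma sr_plus f g m len :
  sum_range (fun i => f i + g i) m len = sum_range f m len + sum_range g m len.
Proof. revert m; induction len; intros m; simpl; [lra|]. rewrite IHlen; lra. Qed.

Lemma sr_scal c f m len :
  sum_range (fun i => c * f i) m len = c * sum_range f m len.
Proof. revert m; induction len; intros m; simpl; [lra|]. rewrite IHlen; lra. Qed.

Lemma sr_split f m a b :
  sum_range f m (a + b) = sum_range f m a + sum_range f (m + a) b.
Proof.
  revert m; induction a; intros m; simpl.
  - rewrite Nat.add_0_r; lra.
  - rewrite IHa. replace (S m + a)%nat with (m + S a)%nat by lia. lra.
Qed.

Lemma sr_zero f m len : (forall i, (m <= i < m + len)%nat -> f i = 0) ->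
  sum_range f m len = 0.
Proof.
  intros H. rewrite (sr_ext f (fun _ => 0)) by auto.
  clear H; revert m; induction len; intros m; simpl; [lra|]. rewrite IHlen; lra.
Qed.

Lemma sr_nonneg f m len : (forall i, (m <= i < m + len)%nat -> 0 <= f i) ->
  0 <= sum_range f m len.
Proof.
  intros H. replace 0 with (sum_range (fun _ => 0) m len).
  - apply sr_le; auto.
  - apply sr_zero; auto.
Qed.

Lemma sr_const c m len : sum_range (fun _ => c) m len = INR len * c.
Proof.
  revert m; induction len; intros m; simpl sum_range; [simpl; lra|].
  rewrite IHlen, S_INR; lra.
Qed.

Lemma sr_swap (F : nat -> nat -> R) m1 l1 m2 l2 :
  sum_range (fun r => sum_range (fun i => F r i) m2 l2) m1 l1 =
  sum_range (fun i => sum_range (fun r => F r i) m1 l1) m2 l2.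
Proof.
  revert m1; induction l1; intros m1; simpl.
  - symmetry; apply sr_zero; auto.
  - rewrite IHl1. rewrite <- sr_plus. reflexivity.
Qed.

Lemma sr_tele f g m len : (forall i, (m <= i < m + len)%nat -> f i <= g (S i) - g i) ->
  sum_range f m len <= g (m + len)%nat - g m.
Proof.
  revert m; induction len; intros m H; simpl.
  - rewrite Nat.add_0_r; lra.
  - assert (H1 := H m ltac:(lia)).
    assert (H2 := IHlen (S m) ltac:(intros; apply H; lia)).
    replace (S m + len)%nat with (m + S len)%nat in H2 by lia. lra.
Qed.
Lemma sft_ind g r k : (r <= k)%nat ->
  sum_from_to g 1 r = sum_from_to (fun i => if (i <=? r)%nat then g i else 0) 1 k.
Proof.
  intros Hr. unfold sum_from_to.
  replace (S k - 1)%nat with (r + (k - r))%nat by lia.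
  rewrite sr_split. rewrite (sr_zero _ (1 + r)); [|intros i Hi; destruct (Nat.leb_spec i r); [lia|auto]].
  replace (S r - 1)%nat with r by lia. rewrite Rplus_0_r.
  apply sr_ext. intros i Hi. destruct (Nat.leb_spec i r); [auto|lia].
Qed.

Lemma dual (k rho : nat) (s w : nat -> R) (C : R) :
 (1 <= rho <= k)%nat -> (forall i, (1<=i<=k)%nat -> 0 <= s i) ->
 sum_from_to s 1 k <= INR rho ->
 (forall r, (rho <= r <= k)%nat -> 0 <= w r <= 1) -> 0 <= C ->
 (forall j, (rho <= j <= k)%nat -> INR j * sum_from_to w j k <= C) ->
 sum_from_to (fun r => Rmin (INR r ^ 2 / 4) (sum_from_to (fun i => INR i * s i) 1 r)) rho k
 <= sum_from_to (fun r => (1 - w r) * (INR r ^ 2 / 4)) rho k + INR rho * C.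
Proof.
  intros Hrk Hs HT Hw HC HW. unfold sum_from_to at 1.
  set (G := fun r i => w r * (if (i <=? r)%nat then INR i * s i else 0)).
  eapply Rle_trans.
  { apply (sr_le _ (fun r => (1 - w r) * (INR r ^ 2 / 4) +
        sum_range (fun i => G r i) 1 k)).
    intros r Hr. unfold G. rewrite sr_scal.
    assert (E := sft_ind (fun i => INR i * s i) r k ltac:(lia)).
    unfold sum_from_to in E. replace (S k - 1)%nat with k in E by lia.
    rewrite <- E. clear E.
    set (a := INR r ^ 2 / 4). set (b := sum_range _ 1 (S r - 1)).
    assert (Hm1 := Rmin_l a b). assert (Hm2 := Rmin_r a b).
    destruct (Hw r ltac:(lia)). unfold sum_from_to; fold b. nra. }
  rewrite sr_plus. unfold sum_from_to. apply Rplus_le_compat_l.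
  rewrite sr_swap.
  apply Rle_trans with (sum_range (fun i => C * s i) 1 k).
  2:{ rewrite sr_scal. unfold sum_from_to in HT. replace (S k - 1)%nat with k in HT by lia.
      rewrite Rmult_comm. apply Rmult_le_compat_r; auto. }
  apply sr_le. intros i Hi.
  assert (Hsi := Hs i ltac:(lia)).
  set (D := sum_range (fun r => if (i <=? r)%nat then w r else 0) rho (S k - rho)).
  assert (ED : sum_range (fun r => G r i) rho (S k - rho) = INR i * s i * D).
  { unfold D. rewrite <- sr_scal. apply sr_ext. intros r Hr. unfold G.
    destruct (i <=? r)%nat; ring. }
  rewrite ED.
  assert (HiD : INR i * D <= C).
  { destruct (Nat.le_gt_cases i rho).
    - assert (D = sum_from_to w rho k).
      { unfold D, sum_from_to. apply sr_ext. intros r Hr. destruct (Nat.leb_spec i r); [auto|lia]. }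
      assert (0 <= D).
      { unfold D; apply sr_nonneg. intros r Hr. destruct (i <=? r)%nat; [apply Hw; lia|lra]. }
      assert (INR i <= INR rho) by (apply le_INR; auto).
      assert (H4 := HW rho ltac:(lia)). rewrite <- H0 in H4. nra.
    - assert (D = sum_from_to w i k).
      { unfold D, sum_from_to. replace (S k - rho)%nat with ((i - rho) + (S k - i))%nat by lia.
        rewrite sr_split. rewrite sr_zero; [|intros r Hr; destruct (Nat.leb_spec i r); [lia|auto]].
        rewrite Rplus_0_l. replace (rho + (i - rho))%nat with i by lia.
        apply sr_ext. intros r Hr. destruct (Nat.leb_spec i r); [auto|lia]. }
      rewrite H0. apply HW; lia. }
  nra.
Qed.
Lemma pa x y : 0 <= y -> y/2 <= x -> 129*x <= 125*y ->
  x^3/3 - y*x^2/4 <= (125/129)^3*y^3/3 - (125/129)^2*y^3/4.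
Proof.
  intros H0 H1 H2. set (z := 125/129*y).
  assert (x <= z) by (unfold z; lra).
  assert (Hd: z^3/3 - y*z^2/4 - (x^3/3 - y*x^2/4) = (z-x)*((x^2+x*z+z^2)/3 - y*(x+z)/4)) by (unfold z; field).
  assert (0 <= (x^2+x*z+z^2)/3 - y*(x+z)/4).
  { assert (x^2+x*z+z^2 >= 3/4*(x+z)^2) by nra.
    assert (3/4*(x+z)^2 >= 3/4*(x+z)*y) by nra. nra. }
  assert (0 <= (z-x)*((x^2+x*z+z^2)/3 - y*(x+z)/4)) by (apply Rmult_le_pos; lra).
  unfold z in *. nra.
Qed.

Lemma pb p A : 0 <= p -> 0 <= A -> -p^3/12 + A^2*p/4 <= A^3/6.
Proof. intros. assert (0 <= (p-A)^2) by (apply pow2_ge_0). assert (0 <= (p-A)^2*(p+2*A)) by (apply Rmult_le_pos; lra). nra. Qed.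

Lemma final_mid x y p : 21 <= y -> 129*x <= 125*y -> 125*y < 129*x + 129 ->
  5*y < 16*p -> 5*p < 2*y -> 0 <= x ->
  ((x+1)^3 - p^3)/12 - (y-x)*(x+/2)*(x+1-p)/4 + p*((y-x)*(x+/2) + (y-x)/2) + (y-x)*(x+/2)
  <= 125000/1597536 * y^3 + 5*(y+1)^2.
Proof.
  intros Hy H1 H2 H3 H4 H5.
  set (M := (y-x)*(x+/2)). set (A := 50*y/129).
  assert (Hx2 : y/2 <= x) by lra.
  assert (Ha := pa x y ltac:(lra) Hx2 H1).
  assert (Hb := pb p A ltac:(lra) ltac:(unfold A; lra)).
  assert (HM0 : 0 <= M) by (unfold M; apply Rmult_le_pos; lra).
  assert (Hc : 5*M <= A^2 + 5*(y+1)).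
  { unfold M, A.
    assert (y - x <= (4*y+129)/129) by lra.
    assert (x + /2 <= (125*y)/129 + /2) by lra.
    assert ((y-x)*(x+/2) <= (4*y+129)/129 * ((125*y)/129 + /2)).
    { apply Rmult_le_compat; lra. }
    nra. }
  assert (Hpc : 5*p*M <= p*A^2 + 5*p*(y+1)).
  { nra. }
  assert (HMle : M <= y*(y+1)) by (unfold M; apply Rmult_le_compat; lra).
  assert (E : ((x+1)^3 - p^3)/12 - M*(x+1-p)/4 + p*(M + (y-x)/2) + M =
     (x^3/3 - y*x^2/4) - (y-x)*x/8 + (3*x^2+3*x+1)/12 - p^3/12 + 5*p*M/4 + 3*M/4 + p*(y-x)/2).
  { unfold M; field. }
  rewrite E.
  assert (A^3/6 + (125/129)^3*y^3/3 - (125/129)^2*y^3/4 = 125000/1597536 * y^3) by (unfold A; field).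
  assert (0 <= (y-x)*x) by (apply Rmult_le_pos; lra).
  assert (p*(y-x) <= y*(y+1)) by (apply Rmult_le_compat; lra).
  assert (x^2 <= y^2) by nra.
  assert (p*(y+1) <= y*(y+1)) by nra.
  nra.
Qed.
Definition PHI k rho s := sum_from_to (fun r => Rmin (INR r ^ 2 / 4) (sum_from_to (fun i => INR i * s i) 1 r)) rho k.

Lemma triv k rho s : (rho <= S k)%nat -> PHI k rho s <= ((INR k + 1)^3 - INR rho ^3)/12.
Proof.
  intros H. unfold PHI, sum_from_to.
  eapply Rle_trans.
  { apply (sr_le _ (fun r => INR r ^ 2 / 4)). intros; apply Rmin_l. }
  eapply Rle_trans.
  { apply (sr_tele _ (fun r => INR r ^ 3 / 12)). intros i _. rewrite S_INR.
    assert (0 <= INR i) by apply pos_INR. nra. }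
  replace (rho + (S k - rho))%nat with (S k) by lia. rewrite S_INR. lra.
Qed.

Lemma nat_lin a b x y : (a*x <= b*y)%nat -> IZR (Z.of_nat a) * INR x <= IZR (Z.of_nat b) * INR y.
Proof. intros; rewrite <- !INR_IZR_INZ, <- !mult_INR; apply le_INR; auto. Qed.
Lemma nat_lin_lt a b x y : (a*x < b*y)%nat -> IZR (Z.of_nat a) * INR x < IZR (Z.of_nat b) * INR y.
Proof. intros; rewrite <- !INR_IZR_INZ, <- !mult_INR; apply lt_INR; auto. Qed.

Lemma tel_inv M r : 0 <= M -> 1 <= r -> M / r^2 <= -M/(r+1 - /2) - (-M/(r - /2)).
Proof.
  intros HM Hr.
  assert (E : -M/(r+1 - /2) - (-M/(r - /2)) - M/r^2 = M * / (4 * r^2 * (r - /2) * (r + /2))).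
  { field. repeat split; lra. }
  assert (0 <= M * / (4 * r^2 * (r - /2) * (r + /2))).
  { apply Rmult_le_pos; auto. apply Rlt_le, Rinv_0_lt_compat.
    assert (0 < r^2) by nra. assert (0 < r - /2) by lra. assert (0 < r + /2) by lra.
    apply Rmult_lt_0_compat; [|lra]. apply Rmult_lt_0_compat; [|lra]. lra. }
  lra.
Qed.

Lemma div_le1 M r : 0 < r -> M <= r -> M / r <= 1.
Proof.
  intros. unfold Rdiv. rewrite <- (Rinv_r r) by lra. apply Rmult_le_compat_r; [|lra].
  apply Rlt_le, Rinv_0_lt_compat; lra.
Qed.

Definition V8 := 125000/1597536.

Lemma core k rho s : (1 <= rho <= k)%nat -> (forall i, (1<=i<=k)%nat -> 0 <= s i) ->
  sum_from_to s 1 k <= INR rho -> PHI k rho s <= V8 * INR k ^ 3 + 5 * (INR k + 1)^2.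
Proof.
  intros Hrk Hs HT.
  assert (Hk0 : 1 <= INR k) by (apply (le_INR 1); lia).
  assert (Hr0 : 1 <= INR rho) by (apply (le_INR 1); lia).
  assert (Hrk' : INR rho <= INR k) by (apply le_INR; lia).
  unfold V8.
  destruct (Nat.le_gt_cases k 20) as [Hsmall|Hbig].
  { eapply Rle_trans. apply triv; lia.
    assert (INR k <= 20).
    { assert (H20 := le_INR _ _ Hsmall). rewrite (INR_IZR_INZ 20) in H20. simpl in H20. lra. }
    assert (0 <= INR rho ^ 3) by (apply pow_le; lra).
    assert ((INR k + 1)^3 <= 21 * (INR k + 1)^2) by nra.
    assert (0 <= INR k ^3) by (apply pow_le; lra). assert (0 <= (INR k + 1)^2) by (apply pow_le; lra). lra. }
  destruct (Nat.le_gt_cases (2*k) (5*rho)) as [Hc3|Hc3].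
  { eapply Rle_trans. apply triv; lia.
    assert (H5 := nat_lin 2 5 k rho ltac:(lia)). simpl in H5.
    assert (Hp : (2/5*INR k)^3 <= INR rho ^ 3) by (apply pow_incr; lra).
    nra. }
  destruct (Nat.le_gt_cases (16*rho) (5*k)) as [Hc1|Hc1].
  { eapply Rle_trans.
    { apply (dual k rho s (fun _ => 1) ((INR k + 1)^2/4)); auto; try (intros; lra).
      - nra.
      - intros j Hj. unfold sum_from_to. rewrite sr_const, minus_INR, S_INR by lia. 
        assert (0 <= (INR k + 1 - 2*INR j)^2) by apply pow2_ge_0. nra. }
    unfold sum_from_to. rewrite sr_zero by (intros; lra). 
    assert (H5 := nat_lin 16 5 rho k ltac:(lia)). simpl in H5.
    nra. }

  set (B := ((125*k)/129)%nat).
  assert (HB1 : (129*B <= 125*k)%nat) by (apply Nat.Div0.mul_div_le; lia).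
  assert (HB2 : (125*k < 129*B + 129)%nat).
  { assert (E := Nat.div_mod_eq (125*k) 129). assert (Hm := Nat.mod_upper_bound (125*k) 129 ltac:(lia)).
    fold B in E. lia. }
  assert (HrB : (rho <= B)%nat) by lia.
  assert (HBk : (B <= k)%nat) by lia.
  assert (Hk2B : (k <= 2*B+1)%nat) by lia.
  assert (R1 := nat_lin 129 125 B k HB1). simpl in R1.
  assert (R2 := nat_lin_lt 125 129 k (S B) ltac:(lia)). rewrite S_INR in R2; simpl in R2.
  assert (R3 := nat_lin_lt 5 16 k rho ltac:(lia)). simpl in R3.
  assert (R4 := nat_lin_lt 5 2 rho k ltac:(lia)). simpl in R4.
  assert (R5 : 21 <= INR k).
  { assert (H21 := le_INR 21 k ltac:(lia)). rewrite (INR_IZR_INZ 21) in H21. simpl in H21. lra. }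
  assert (Hx0 : 0 <= INR B) by apply pos_INR.
  assert (HxB : INR rho <= INR B) by (apply le_INR; lia).
  assert (Hxk : INR B <= INR k) by (apply le_INR; lia).
  set (x := INR B) in *. set (y := INR k) in *. set (p := INR rho) in *.
  set (M := (y - x) * (x + /2)).
  assert (HM0 : 0 <= M) by (unfold M; apply Rmult_le_pos; lra).
  assert (HMp : M <= p^2).
  { unfold M. assert ((y-x)*(x+/2) <= (4*y+129)/129 * y) by (apply Rmult_le_compat; lra).
    assert ((5*y)^2 < (16*p)^2) by nra. nra. }
  set (w := fun r => if (r <=? B)%nat then M / INR r ^ 2 else 1).
  set (C := M + (y-x)/2 + M/p).
  assert (HC0 : 0 <= C).
  { unfold C. assert (0 <= M/p) by (apply Rmult_le_pos; [lra| apply Rlt_le, Rinv_0_lt_compat; lra]). lra. }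
  eapply Rle_trans.
  { apply (dual k rho s w C); auto.
    - intros r Hr. unfold w. destruct (Nat.leb_spec r B).
      + assert (p <= INR r) by (apply le_INR; lia).
        assert (0 < INR r ^ 2) by nra.
        split. apply Rmult_le_pos; [lra| apply Rlt_le, Rinv_0_lt_compat; lra].
        apply div_le1; nra.
      + lra.
    - intros j Hj. assert (Hpj : p <= INR j) by (apply le_INR; lia).
      destruct (Nat.le_gt_cases j B) as [HjB|HjB].
      + unfold sum_from_to. replace (S k - j)%nat with ((S B - j) + (k - B))%nat by lia.
        rewrite sr_split.
        rewrite (sr_ext w (fun _ => 1) (j + (S B - j))) by (intros r Hr; unfold w; destruct (Nat.leb_spec r B); [lia|auto]).
        rewrite sr_const, Rmult_1_r, minus_INR by lia. fold x y.
        rewrite (sr_ext w (fun r => M / INR r ^ 2)) by (intros r Hr; unfold w; destruct (Nat.leb_spec r B); [auto|lia]).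
        assert (T := sr_tele (fun r => M / INR r ^ 2) (fun r => - M / (INR r - /2)) j (S B - j)).
        replace (j + (S B - j))%nat with (S B) in T by lia. rewrite S_INR in T. fold x in T.
        assert (T' : sum_range (fun r => M / INR r ^ 2) j (S B - j) <= - M / (x + 1 - / 2) - - M / (INR j - / 2)).
        { apply T. intros r Hr. rewrite S_INR. apply tel_inv; auto.
          assert (H1r := le_INR 1 r ltac:(lia)). simpl in H1r. lra. }
        clear T.
        set (q := INR j) in *.
        assert (E1 : - M / (x + 1 - / 2) = - (y - x)) by (unfold M; field; lra).
        assert (E2 : - - M / (q - /2) = M / (q - /2)) by (field; lra).
        assert (E3 : q * (M / (q - /2)) = M + M / (2*q - 1)) by (field; lra).
        assert (E4 : M / (2*q-1) <= M / p).
        { apply Rmult_le_compat_l; auto. apply Rinv_le_contravar; lra. }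
        assert (0 <= q) by lra.
        apply Rle_trans with (q * (M / (q - /2))).
        { apply Rmult_le_compat_l; auto. lra. }
        unfold C. lra.
      + unfold sum_from_to.
        rewrite (sr_ext w (fun _ => 1)) by (intros r Hr; unfold w; destruct (Nat.leb_spec r B); [lia|auto]).
        rewrite sr_const, Rmult_1_r, minus_INR, S_INR by lia. fold y.
        assert (Hj1 : x + 1 <= INR j) by (unfold x; rewrite <- S_INR; apply le_INR; lia).
        assert (Hj2 : y <= x + INR j) by (unfold x; rewrite <- plus_INR; apply le_INR; lia).
        assert (0 <= M/p) by (apply Rmult_le_pos; [lra| apply Rlt_le, Rinv_0_lt_compat; lra]).
        assert (0 <= (INR j - (x+1)) * (INR j - (y - x))) by (apply Rmult_le_pos; lra).
        unfold C, M in *. nra. }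
  assert (HF : sum_from_to (fun r => (1 - w r) * (INR r ^ 2 / 4)) rho k <= ((x+1)^3 - p^3)/12 - M*(x+1-p)/4).
  { unfold sum_from_to. replace (S k - rho)%nat with ((S B - rho) + (k - B))%nat by lia.
    rewrite sr_split. rewrite (sr_zero _ (rho + (S B - rho))) by (intros r Hr; unfold w; destruct (Nat.leb_spec r B); [lia|ring]).
    rewrite Rplus_0_r.
    assert (T := sr_tele (fun r => (1 - w r) * (INR r ^ 2 / 4)) (fun r => INR r ^ 3 / 12 - M * INR r / 4) rho (S B - rho)).
    replace (rho + (S B - rho))%nat with (S B) in T by lia. rewrite S_INR in T. fold x p in T.
    eapply Rle_trans; [apply T|lra].
    intros r Hr. unfold w. destruct (Nat.leb_spec r B); [|lia].
    assert (H1r := le_INR 1 r ltac:(lia)). simpl in H1r. rewrite S_INR.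
    assert (E : (1 - M / INR r ^ 2) * (INR r ^ 2 / 4) = INR r ^ 2 / 4 - M / 4) by (field; lra).
    rewrite E. nra. }
  assert (EC : p * C = p * (M + (y-x)/2) + M) by (unfold C; field; lra).
  assert (R2b : 125 * y < 129 * x + 129) by lra.
  assert (Fm := final_mid x y p R5 R1 R2b R3 R4 Hx0). fold M in Fm. fold p. lra.
Qed.

Theorem proposition7 :
  exists f : nat -> R,
    Un_cv (fun n => f n / INR n ^ 3) 0 /\
    forall (n rho : nat) (s : nat -> R),
      (0 < n)%nat -> (0 < rho)%nat -> 2 * INR rho < INR n ->
      (forall i, (1 <= i <= Nat.div2 n)%nat -> 0 <= s i) ->
      sum_from_to s 1 (Nat.div2 n) <= INR rho ->
      phi n rho s <= 15625 * INR n ^ 3 / 1597536 + f n.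
Proof.
  exists (fun n => 100 * (INR n + 1)^2). split.
  - intros eps He.
    destruct (INR_archimed eps 400 He) as [N HN].
    exists (max N 1). intros m Hm. unfold R_dist. rewrite Rminus_0_r.
    assert (HmN : INR N <= INR m) by (apply le_INR; lia).
    assert (Hm1 : 1 <= INR m) by (apply (le_INR 1); lia).
    assert (Hm3 : 0 < INR m ^ 3) by (apply pow_lt; lra).
    assert (0 <= 100 * (INR m + 1) ^ 2 / INR m ^ 3).
    { apply Rmult_le_pos; [nra| apply Rlt_le, Rinv_0_lt_compat; auto]. }
    rewrite Rabs_pos_eq by auto.
    apply (Rmult_lt_reg_r (INR m ^ 3)); auto.
    unfold Rdiv. rewrite Rmult_assoc, Rinv_l, Rmult_1_r by lra.
    assert (eps * INR m >= 400) by nra.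
    assert ((INR m + 1)^2 <= 4 * INR m ^ 2) by nra.
    assert (eps * INR m ^ 3 >= 400 * INR m ^ 2) by nra.
    nra.
  - intros n rho s Hn Hr Hrn Hs HT.
    assert (H2 : (2 * rho < n)%nat).
    { apply INR_lt. rewrite mult_INR. simpl (INR 2). lra. }
    set (k := Nat.div2 n) in *.
    assert (Hk : (2*k <= n <= 2*k+1)%nat).
    { assert (E := Nat.div2_odd n). fold k in E. destruct (Nat.odd n); simpl in E; lia. }
    change (phi n rho s) with (PHI k rho s).
    eapply Rle_trans. apply core; auto; lia.
    assert (Hkn : 2 * INR k <= INR n).
    { assert (H5 := nat_lin 2 1 k n ltac:(lia)). simpl in H5. lra. }
    assert (0 <= INR k) by apply pos_INR.
    assert ((2 * INR k)^3 <= INR n ^3) by (apply pow_incr; lra).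
    assert ((INR k + 1)^2 <= (INR n + 1)^2) by (apply pow_incr; lra).
    unfold V8. nra.
Qed.
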